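(* Let $V=\mathbb R^{p,q}$, $p=p'+p''$ with $p'\equiv3\pmod4$, $W$ a $C\ell^0(V)$-module, $\Pi:\wedge^2W\to V$ an $\mathfrak o(V)$-equivariant linear map, and $b=b(\Pi)$. Then there exist integers $l,m\ge0$ and a $b$-orthogonal direct sum decomposition $W=\bigoplus_{i=0}^{l+m}W_i$ into $C\ell^0(V)$-submodules such that: (1) $\Pi(W_0\wedge W)=0$, $\Pi(W_i\wedge W_j)=0$ for $i\ne j$, and $\Pi(\wedge^2W_i)=V$ for $i=1,\dots,l$; (2) $W_0=\ker b$ and $b|_{W_i\times W_i}$ is nondegenerate for all $i\ge1$; (3) for $i=1,\dots,l$ the module $W_i$ is irreducible, and for $j=l+1,\dots,l+m$ the module $W_j=X_j\oplus X'_j$ is the direct sum of two irreducible $b$-isotropic $C\ell^0(V)$-submodules; (4) the restriction of $b$ to any irreducible $C\ell^0(V)$-submodule of $X=\bigoplus_{j=l+1}^{l+m}W_j$ vanishes.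
   Context: Let $V=\mathbb{R}^{p,q}$ be $\mathbb R^{p+q}$ with the scalar product $\langle x,y\rangle=\sum_{i=1}^{p}x^iy^i-\sum_{j=p+1}^{p+q}x^jy^j$ and its standard orthonormal basis. The Clifford algebra $C\ell(V)$ is generated by $V$ subject to $xy+yx=-2\langle x,y\rangle 1$, with even part $C\ell^0(V)$. Identify $\mathfrak{o}(V)=\wedge^2V$ via $(x\wedge y)(z)=\langle y,z\rangle x-\langle x,z\rangle y$; the map $x\wedge y\mapsto-\frac14(xy-yx)$ is a Lie algebra isomorphism of $\mathfrak o(V)$ onto $\mathfrak{spin}(V)\subset C\ell^0(V)$, and via it $\mathfrak o(V)$ acts on any $C\ell^0(V)$-module $W$. Fix $p=p'+p''$ with $p'\equiv 3\pmod 4$; $e_1,\dots,e_{p'}$ are the first $p'$ standard basis vectors, and $b(s,t)=\langle e_1,\Pi(e_2\cdots e_{p'}s\wedge t)\rangle$ for $s,t\in W$ (Clifford product acting on $W$); by a result of the paper $b$ is symmetric. A subspace is $b$-isotropic if $b$ vanishes on it. *)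

(* Defs.v *)
From HB Require Import structures.
From mathcomp Require Import all_boot all_order all_algebra.
From mathcomp Require Export reals.
Set Implicit Arguments. Unset Strict Implicit. Unset Printing Implicit Defensive.
Import GRing.Theory Num.Theory.
Local Open Scope ring_scope.

(* V = R^{p,q} = 'rV[R]_n, n = p + q, standard orthonormal basis e_0..e_{n-1}
   (0-indexed); <e_i,e_i> = eps p i = 1 if i < p, -1 otherwise. *)
Definition eps {R : nzRingType} (p : nat) {n : nat} (i : 'I_n) : R :=
  if (i < p)%N then 1 else -1.

Definition ip {R : comNzRingType} (p : nat) {n : nat} (x y : 'rV[R]_n) : R :=
  \sum_(i < n) eps p i * x 0 i * y 0 i.

(* the basis vector e_1 of the paper (index 0 here) *)
Definition e_first {R : nzRingType} {n : nat} : 'rV[R]_n :=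
  \row_(j < n) ((val j == 0%N)%:R).

Definition symd {T : finType} (A B : {set T}) : {set T} := (A :\: B) :|: (B :\: A).

Definition even_set {T : finType} (A : {set T}) : bool := ~~ odd #|A|.

(* Clifford basis e_A = e_{a1} ... e_{ak} (a1 < ... < ak);
   e_A e_B = clsign A B * e_{A symd B}, using x y + y x = -2<x,y>,
   so e_i e_i = - eps i and e_i e_j = - e_j e_i for i <> j. *)
Definition clsign {R : nzRingType} (p : nat) {n : nat} (A B : {set 'I_n}) : R :=
  (-1) ^+ #|[set ab : 'I_n * 'I_n | (ab.1 \in A) && (ab.2 \in B) && (ab.2 < ab.1)%N]|
  * \prod_(i in A :&: B) (- eps p i).

(* A (left) Cl^0(V)-module structure on vT: rho A is the action of the basis
   element e_A of Cl^0(V) (A even); this is a unital algebra morphism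
   Cl^0(V) -> End(vT) written on the basis. (Values on odd sets are unused.) *)
Definition is_Cl0_module {R : fieldType} (p : nat) {n : nat} {vT : vectType R}
  (rho : {set 'I_n} -> vT -> vT) : Prop :=
  [/\ forall A, even_set A -> forall (a : R) (u v : vT),
        rho A (a *: u + v) = a *: rho A u + rho A v,
      forall v, rho set0 v = v &
      forall A B, even_set A -> even_set B -> forall v,
        rho A (rho B v) = clsign p A B *: rho (symd A B) v].

Definition cl2 {R : fieldType} (p : nat) {n : nat} {vT : vectType R}
  (rho : {set 'I_n} -> vT -> vT) (i j : 'I_n) (v : vT) : vT :=
  clsign p [set i] [set j] *: rho (symd [set i] [set j]) v.

(* action of x /\ y in o(V) on W via x /\ y |-> -1/4 (xy - yx) *)
Definition spin_act {R : fieldType} (p : nat) {n : nat} {vT : vectType R}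
  (rho : {set 'I_n} -> vT -> vT) (x y : 'rV[R]_n) (v : vT) : vT :=
  (- (4%:R)^-1) *: \sum_(i < n) \sum_(j < n)
      (x 0 i * y 0 j) *: (cl2 p rho i j v - cl2 p rho j i v).

Definition oV_act {R : comNzRingType} (p : nat) {n : nat} (x y z : 'rV[R]_n)
  : 'rV[R]_n := ip p y z *: x - ip p x z *: y.

(* Pi : wedge^2 W -> V linear, written as an alternating bilinear map,
   and o(V)-equivariant (checked on decomposable x /\ y, which span o(V)). *)
Definition is_equivariant_Pi {R : fieldType} (p : nat) {n : nat} {vT : vectType R}
  (rho : {set 'I_n} -> vT -> vT) (Pi : vT -> vT -> 'rV[R]_n) : Prop :=
  [/\ forall (a : R) s s' t, Pi (a *: s + s') t = a *: Pi s t + Pi s' t,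
      forall (a : R) s t t', Pi s (a *: t + t') = a *: Pi s t + Pi s t',
      forall s, Pi s s = 0 &
      forall x y s t, Pi (spin_act p rho x y s) t + Pi s (spin_act p rho x y t)
                      = oV_act p x y (Pi s t)].

(* b(s,t) = < e_1, Pi(e_2 ... e_{p'} s /\ t) > *)
Definition bform {R : fieldType} (p' p : nat) {n : nat} {vT : vectType R}
  (rho : {set 'I_n} -> vT -> vT) (Pi : vT -> vT -> 'rV[R]_n) (s t : vT) : R :=
  ip p e_first (Pi (rho [set j : 'I_n | (0 < val j < p')%N] s) t).

Definition submodule {R : fieldType} {n : nat} {vT : vectType R}
  (rho : {set 'I_n} -> vT -> vT) (U : {vspace vT}) : Prop :=
  forall A, even_set A -> forall u, u \in U -> rho A u \in U.

Definition irreducible {R : fieldType} {n : nat} {vT : vectType R}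
  (rho : {set 'I_n} -> vT -> vT) (U : {vspace vT}) : Prop :=
  [/\ submodule rho U, U != 0%VS &
      forall U' : {vspace vT}, submodule rho U' -> (U' <= U)%VS ->
        U' = 0%VS \/ U' = U].

Definition isotropic {R : fieldType} {vT : vectType R}
  (b : vT -> vT -> R) (U : {vspace vT}) : Prop :=
  forall s t, s \in U -> t \in U -> b s t = 0.

(* Main.v *)
Require Import Defs.
From HB Require Import structures.
From mathcomp Require Import all_boot all_order all_algebra.
From mathcomp Require Import reals.
From mathcomp Require Import ring zify.
From Stdlib Require Import Classical.
Import GRing.Theory Num.Theory.
Local Open Scope ring_scope.
Set Implicit Arguments. Unset Strict Implicit. Unset Printing Implicit Defensive.

Lemma lfunE' (R : fieldType) (aT rT : vectType R) (f : aT -> rT)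
  (H : forall a u v, f (a *: u + v) = a *: f u + f v) : linfun f =1 f.
Proof.
pose g : {linear aT -> rT} := HB.pack f (GRing.isLinear.Build _ _ _ _ f H).
exact: (lfunE g).
Qed.

Section Abs.
Variables (R : fieldType) (n : nat) (vT : vectType R).
Variable rho : {set 'I_n} -> vT -> vT.
Variable b : vT -> vT -> R.
Hypothesis rho_lin : forall A, even_set A -> forall a u v,
  rho A (a *: u + v) = a *: rho A u + rho A v.
Hypothesis bl1 : forall a s s' t, b (a *: s + s') t = a * b s t + b s' t.
Hypothesis bsym : forall s t, b s t = b t s.
Hypothesis binv : forall A, even_set A -> exists nu : R,
  forall s t, b s (rho A t) = nu * b (rho A s) t.

Lemma bl2 a s t t' : b s (a *: t + t') = a * b s t + b s t'.
Proof. by rewrite bsym bl1 !(bsym s). Qed.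

Lemma b0l t : b 0 t = 0.
Proof.
have := bl1 1 0 0 t; rewrite scale1r addr0 mul1r => h.
by apply: (addrI (b 0 t)); rewrite addr0 -h.
Qed.
Lemma b0r s : b s 0 = 0. Proof. by rewrite bsym b0l. Qed.
Lemma bDl s s' t : b (s + s') t = b s t + b s' t.
Proof. by have := bl1 1 s s' t; rewrite scale1r mul1r. Qed.
Lemma bDr s t t' : b s (t + t') = b s t + b s t'.
Proof. by rewrite bsym bDl !(bsym _ s). Qed.
Lemma bZl a s t : b (a *: s) t = a * b s t.
Proof. by have := bl1 a s 0 t; rewrite addr0 b0l addr0. Qed.
Lemma bNl s t : b (- s) t = - b s t.
Proof. by rewrite -scaleN1r bZl mulN1r. Qed.
Lemma bsuml I (r : seq I) (P : pred I) (F : I -> vT) t :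
  b (\sum_(i <- r | P i) F i) t = \sum_(i <- r | P i) b (F i) t.
Proof.
exact: (big_morph (fun s => b s t) (fun x y => bDl x y t) (b0l t)).
Qed.
Lemma bsumr I (r : seq I) (P : pred I) (F : I -> vT) s :
  b s (\sum_(i <- r | P i) F i) = \sum_(i <- r | P i) b s (F i).
Proof. by rewrite bsym bsuml; apply: eq_bigr => i _; rewrite bsym. Qed.

Definition rowL (X : {vspace vT}) : 'Hom(vT, 'rV[R]_(\dim X)) :=
  linfun (fun t => \row_i b (vbasis X)`_i t).
Definition lorth X := lker (rowL X).

Lemma rowLE (X : {vspace vT}) t : rowL X t = \row_i b (vbasis X)`_i t.
Proof.
rewrite /rowL lfunE' // => a u v; apply/rowP => i.
by rewrite !mxE bl2.
Qed.

Lemma mem_lorth (X : {vspace vT}) t : t \in lorth X <-> forall x, x \in X -> b x t = 0.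
Proof.
rewrite memv_ker rowLE; split.
  move=> /eqP /rowP H x /coord_vbasis ->.
  rewrite bsuml big1 // => i _; rewrite bZl.
  by have := H i; rewrite !mxE => ->; rewrite mulr0.
move=> H; apply/eqP/rowP => i; rewrite !mxE; apply: H.
by apply: vbasis_mem; apply: mem_nth; rewrite size_tuple.
Qed.

Lemma sub_cap (U V : {vspace vT}) : submodule rho U -> submodule rho V -> submodule rho (U :&: V)%VS.
Proof.
move=> hU hV A eA u; rewrite !memv_cap => /andP[uU uV].
by rewrite hU // hV.
Qed.

Lemma sub_add (U V : {vspace vT}) : submodule rho U -> submodule rho V -> submodule rho (U + V)%VS.
Proof.
move=> hU hV A eA w /memv_addP[u uU [v vV ->]].
by rewrite -(scale1r u) rho_lin // scale1r memv_add // ?hU ?hV.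
Qed.

Lemma sub_full : submodule rho fullv.
Proof. by move=> *; rewrite memvf. Qed.

Lemma lorth_sub (X : {vspace vT}) : submodule rho X -> submodule rho (lorth X).
Proof.
move=> hX A eA t /mem_lorth Ht; apply/mem_lorth => x xX.
have [nu Hnu] := binv eA.
by rewrite Hnu Ht ?mulr0 // hX.
Qed.

Lemma cap0P (U V : {vspace vT}) :
  (forall x, x \in U -> x \in V -> x = 0) -> (U :&: V)%VS = 0%VS.
Proof.
move=> H; apply/eqP; rewrite -subv0; apply/subvP => x.
by rewrite memv_cap memv0 => /andP[xU xV]; rewrite (H x xU xV).
Qed.

Lemma dim_pair (X Y : {vspace vT}) : (forall x, x \in X -> x != 0 -> exists2 y, y \in Y & b y x != 0) ->
  (\dim X <= \dim Y)%N.
Proof.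
move=> H; have := limg_ker_dim (rowL Y) X.
have -> : (X :&: lker (rowL Y))%VS = 0%VS.
  apply: cap0P => x xX /mem_lorth xo; apply/eqP; apply/negPn/negP => nx.
  by have [y yY] := H x xX nx; rewrite xo ?eqxx.
rewrite dimv0 add0n => <-.
apply: leq_trans (dimvS (subvf _)) _.
by rewrite dimvf /dim /= mul1n.
Qed.

Definition nondeg (X : {vspace vT}) :=
  forall x, x \in X -> (forall y, y \in X -> b x y = 0) -> x = 0.

Lemma nondegP (X : {vspace vT}) x : nondeg X -> x \in X -> x != 0 -> exists2 y, y \in X & b x y != 0.
Proof.
move=> nX xX nx; apply: NNPP => H; move/eqP: nx; apply; apply: nX xX _ => y yX.
by apply: NNPP => hb; apply: H; exists y => //; apply/eqP.
Qed.

Lemma split_orth (H N : {vspace vT}) : (H <= N)%VS -> nondeg H -> nondeg N ->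
  [/\ (H + (N :&: lorth H))%VS = N, (H :&: (N :&: lorth H))%VS = 0%VS,
      nondeg (N :&: lorth H) & (\dim H + \dim (N :&: lorth H) = \dim N)%N].
Proof.
move=> sHN nH nN.
have c0 : (H :&: (N :&: lorth H))%VS = 0%VS.
  apply: cap0P => x xH; rewrite memv_cap => /andP[_ /mem_lorth xo].
  by apply: (nH x xH) => y yH; rewrite bsym xo.
have := limg_ker_dim (rowL H) N.
have le1 : (\dim (rowL H @: N) <= \dim H)%N.
  by apply: leq_trans (dimvS (subvf _)) _; rewrite dimvf /dim /= mul1n.
have := dimv_sum_cap H (N :&: lorth H); rewrite c0 dimv0 addn0.
have sub : (H + (N :&: lorth H) <= N)%VS by rewrite subv_add sHN capvSl.
move=> e2 e1.
have eqN : (H + (N :&: lorth H))%VS = N.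
  apply/eqP; rewrite eqEdim sub /= -{1}e1 e2 addnC.
  by apply: leq_add.
split => //.
  move=> x; rewrite memv_cap => /andP[xN /mem_lorth xo] Hy.
  apply: (nN x xN) => y; rewrite -eqN => /memv_addP[u uH [v vV ->]].
  by rewrite bDr (Hy v vV) bsym xo // add0r.
by move: e2; rewrite eqN => ->.
Qed.

Lemma exists_irr (N : {vspace vT}) : submodule rho N -> N != 0%VS ->
  exists2 S, irreducible rho S & (S <= N)%VS.
Proof.
have [k] := ubnP (\dim N); elim: k N => // k IH N ltk sN nN.
case: (classic (irreducible rho N)) => [iN|niN]; first by exists N.
have [U [sU UN U0 UNe]] : exists U, [/\ submodule rho U, (U <= N)%VS, U <> 0%VS & U <> N].
  apply: NNPP => H; apply: niN; split => // U sU UN.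
  apply: NNPP => H2; apply: H; exists U; split => // e; apply: H2; tauto.
have ltU : (\dim U < \dim N)%N.
  rewrite ltn_neqAle dimvS // andbT; apply/negP => /eqP e.
  by apply: UNe; apply/eqP; rewrite eqEdim UN e leqnn.
have [S iS SU] := IH U (leq_trans ltU (ltnSE ltk)) sU (introN eqP U0).
by exists S => //; apply: subv_trans UN.
Qed.

Definition Qf (N : {vspace vT}) :=
  forall U, irreducible rho U -> (U <= N)%VS -> isotropic b U.

Definition odecomp (L : seq {vspace vT}) :=
  (forall i, (i < size L)%N -> submodule rho (nth 0%VS L i) /\ nondeg (nth 0%VS L i)) /\
  (forall i j, (i < size L)%N -> (j < size L)%N -> i != j ->
     forall s t, s \in nth 0%VS L i -> t \in nth 0%VS L j -> b s t = 0).

Lemma nth_le_sum (L : seq {vspace vT}) i : (i < size L)%N ->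
  (nth 0%VS L i <= \sum_(X <- L) X)%VS.
Proof.
elim: L i => // X L IH [|i] /=; rewrite big_cons; first by rewrite addvSl.
by move=> lt; apply: subv_trans (IH i lt) (addvSr _ _).
Qed.

Lemma odecomp_cons (X : {vspace vT}) L (N' : {vspace vT}) : odecomp L -> (\sum_(Y <- L) Y <= N')%VS ->
  submodule rho X -> nondeg X -> (forall s t, s \in X -> t \in N' -> b s t = 0) ->
  odecomp (X :: L).
Proof.
move=> [h1 h2] sL sX nX oX; split.
  by case=> [|i] //= lt; apply: h1.
have inN j t : (j < size L)%N -> t \in nth 0%VS L j -> t \in N'.
  by move=> lt tj; apply: (subvP sL); apply: (subvP (nth_le_sum lt)).
case=> [|i] [|j] //= li lj ne s t si tj.
- by apply: oX si (inN _ _ lj tj).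
- by rewrite bsym; apply: oX tj (inN _ _ li si).
- by apply: h2 si tj.
Qed.

Definition hyperbolic (H : {vspace vT}) := exists X X' : {vspace vT},
  [/\ irreducible rho X, irreducible rho X', isotropic b X & isotropic b X'] /\
  (X + X')%VS = H /\ (X :&: X')%VS = 0%VS.

Lemma irr_neq0 (S : {vspace vT}) : irreducible rho S -> \dim S != 0%N.
Proof. by case=> _ nS _; rewrite dimv_eq0. Qed.

Lemma phase1 (N : {vspace vT}) : submodule rho N -> nondeg N -> exists Ss : seq {vspace vT}, exists N1,
  [/\ odecomp Ss, (forall i, (i < size Ss)%N -> irreducible rho (nth 0%VS Ss i)),
      (\sum_(X <- Ss) X + N1)%VS = N, [/\ submodule rho N1, nondeg N1 & Qf N1] &
      (forall i, (i < size Ss)%N -> forall s t, s \in nth 0%VS Ss i -> t \in N1 -> b s t = 0)].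
Proof.
have [k] := ubnP (\dim N); elim: k N => // k IH N ltk sN nN.
case: (classic (exists2 S, irreducible rho S /\ (S <= N)%VS & ~ isotropic b S)); last first.
  move=> H; exists [::], N; split.
  - by split.
  - by [].
  - by rewrite big_nil add0v.
  - split => // U iU UN; apply: NNPP => nI; apply: H; exists U => //.
  - by [].
move=> [S [iS SN] nI].
have nS : nondeg S.
  have sS := iS; case: sS => sS _ mS.
  have [e|e] := mS _ (sub_cap sS (lorth_sub sS)) (capvSl _ _).
    move=> x xS Hx; apply/eqP; rewrite -memv0 -e memv_cap xS /=.
    by apply/mem_lorth => y yS; rewrite bsym Hx.
  exfalso; apply: nI => s t sS' tS.
  have : t \in (S :&: lorth S)%VS by rewrite e.
  by rewrite memv_cap => /andP[_ /mem_lorth ->].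
have [eN c0 nN' dimE] := split_orth SN nS nN.
have sN' : submodule rho (N :&: lorth S)%VS by apply: sub_cap => //; apply: lorth_sub; case: iS.
have ltk' : (\dim (N :&: lorth S) < k)%N.
  rewrite -ltnS; apply: leq_trans ltk; rewrite -dimE ltnS -addn1 addnC leq_add2r.
  by rewrite lt0n irr_neq0.
have [Ss [N1 [oSs iSs eS [sN1 nN1 qN1] oN1]]] := IH _ ltk' sN' nN'.
have oS s t : s \in S -> t \in (N :&: lorth S)%VS -> b s t = 0.
  by move=> sS; rewrite memv_cap => /andP[_ /mem_lorth ->].
exists (S :: Ss), N1; split.
- apply: odecomp_cons oSs _ _ nS oS; first by rewrite -eS addvSl.
  by case: iS.
- by case=> [|i] //= lt; apply: iSs.
- by rewrite big_cons -addvA eS.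
- by [].
case=> [|i] /= lt s t si tN1.
  by apply: oS si _; rewrite -eS; apply: (subvP (addvSr _ _)).
exact: (oN1 i lt s t si tN1).
Qed.

Hypothesis compl : forall U M, submodule rho U -> submodule rho M -> (U <= M)%VS ->
  exists U', [/\ submodule rho U', (U + U')%VS = M & (U :&: U')%VS = 0%VS].

Lemma hyp_step (N : {vspace vT}) : submodule rho N -> nondeg N -> Qf N -> N != 0%VS ->
  exists H, [/\ (H <= N)%VS, submodule rho H, nondeg H, hyperbolic H & H != 0%VS].
Proof.
move=> sN nN qN N0.
have [S iS SN] := exists_irr sN N0.
have isoS := qN S iS SN.
have sS : submodule rho S by case: iS.
have S0 : S != 0%VS by case: iS.
pose K := (N :&: lorth S)%VS.
have sK : submodule rho K by apply: sub_cap => //; apply: lorth_sub.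
have [C [sC eKC cKC]] := compl sK sN (capvSl _ _).
have CN : (C <= N)%VS by rewrite -eKC addvSr.
have SK : (S <= K)%VS.
  apply/subvP => s sS'; rewrite memv_cap (subvP SN) //=.
  by apply/mem_lorth => x xS; apply: isoS.
have ii c : c \in C -> c != 0 -> exists2 s, s \in S & b s c != 0.
  move=> cC nc; apply: NNPP => H; move/eqP: nc; apply.
  apply/eqP; rewrite -memv0 -cKC memv_cap cC andbT memv_cap (subvP CN) //=.
  apply/mem_lorth => x xS; apply: NNPP => hb; apply: H; exists x => //; exact/eqP.
have iii s : s \in S -> s != 0 -> exists2 c, c \in C & b s c != 0.
  move=> sS' ns; have [y yN hy] := nondegP nN (subvP SN _ sS') ns.
  move: yN; rewrite -eKC => /memv_addP[k kK [c cC ey]].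
  exists c => //; move: hy; rewrite ey bDr.
  move: kK; rewrite memv_cap => /andP[_ /mem_lorth ->] //; by rewrite add0r.
have iC : irreducible rho C.
  split => //.
    apply/negP => /eqP C0; move: S0; rewrite -vpick0 => nps.
    have [c] := iii _ (memv_pick S) nps; by rewrite C0 memv0 => /eqP ->; rewrite b0r eqxx.
  move=> C1 sC1 C1C.
  case: (eqVneq C1 0%VS) => [->|nC1]; [by left | right].
  pose S1 := (S :&: lorth C1)%VS.
  have [e|e] : S1 = 0%VS \/ S1 = S.
    by case: iS => _ _; apply; [apply: sub_cap => //; apply: lorth_sub | apply: capvSl].
    apply/eqP; rewrite eqEdim C1C /=.
    have d1 : (\dim S <= \dim C1)%N.
      apply: dim_pair => s sS' ns; apply: NNPP => H; move/eqP: ns; apply.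
      apply/eqP; rewrite -memv0 -e memv_cap sS' /=; apply/mem_lorth => x xC.
      apply: NNPP => hb; apply: H; by exists x => //; apply/eqP.
    have d2 : (\dim C <= \dim S)%N.
      apply: dim_pair => c cC nc; have [s0 s0S hs] := ii c cC nc.
      by exists s0.
    exact: leq_trans d2 d1.
  exfalso; move: nC1; rewrite -vpick0 => nc.
  have [s sS' hs] := ii _ (subvP C1C _ (memv_pick C1)) nc.
  have : s \in S1 by rewrite e.
  by rewrite memv_cap => /andP[_ /mem_lorth H]; move: hs; rewrite bsym H ?memv_pick ?eqxx.
have isoC := qN C iC CN.
have cSC : (S :&: C)%VS = 0%VS.
  apply: cap0P => x xS xC; apply/eqP; rewrite -memv0 -cKC memv_cap xC (subvP SK) //.
exists (S + C)%VS; split.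
- by rewrite subv_add SN CN.
- exact: sub_add.
- move=> x /memv_addP[s sS' [c cC ->]] Hx.
  have c0 : c = 0.
    apply: NNPP => nc; have [s2 s2S hs2] := ii c cC (introN eqP nc).
    have := Hx s2 (subvP (addvSl _ _) _ s2S).
    by rewrite bsym bDr isoS // add0r => e; move: hs2; rewrite e eqxx.
  have s0 : s = 0.
    apply: NNPP => ns; have [c2 c2C hc2] := iii s sS' (introN eqP ns).
    have := Hx c2 (subvP (addvSr _ _) _ c2C).
    by rewrite c0 addr0 => e; move: hc2; rewrite e eqxx.
  by rewrite s0 c0 addr0.
- by exists S, C; split.
by apply/negP => /eqP e; move: S0; rewrite -subv0 -e addvSl.
Qed.

Lemma phase2 (N : {vspace vT}) : submodule rho N -> nondeg N -> Qf N ->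
  exists Hs : seq {vspace vT},
  [/\ odecomp Hs, (forall i, (i < size Hs)%N -> hyperbolic (nth 0%VS Hs i)) &
      (\sum_(X <- Hs) X)%VS = N].
Proof.
have [k] := ubnP (\dim N); elim: k N => // k IH N ltk sN nN qN.
case: (eqVneq N 0%VS) => [->|N0].
  by exists [::]; split => //; rewrite big_nil.
have [H [HN sH nH hH H0]] := hyp_step sN nN qN N0.
have [eN c0 nN' dimE] := split_orth HN nH nN.
have sN' : submodule rho (N :&: lorth H)%VS by apply: sub_cap => //; apply: lorth_sub.
have qN' : Qf (N :&: lorth H)%VS.
  by move=> U iU UN'; apply: qN iU (subv_trans UN' (capvSl _ _)).
have ltk' : (\dim (N :&: lorth H) < k)%N.
  rewrite -ltnS; apply: leq_trans ltk; rewrite -dimE ltnS -addn1 addnC leq_add2r.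
  by rewrite lt0n dimv_eq0.
have [Hs [oHs hHs eHs]] := IH _ ltk' sN' nN' qN'.
exists (H :: Hs); split.
- apply: odecomp_cons oHs _ sH nH _; first by rewrite eHs.
  by move=> s t sH'; rewrite memv_cap => /andP[_ /mem_lorth ->].
- by case=> [|i] //= lt; apply: hHs.
- by rewrite big_cons eHs.
Qed.

Lemma abs_main : exists (l m : nat) (W : nat -> {vspace vT}),
    [/\ (\sum_(i < (l + m).+1) W i)%VS = fullv,
        directv (\sum_(i < (l + m).+1) W i),
        (forall i, (i <= l + m)%N -> submodule rho (W i)) &
        (forall i j, (i <= l + m)%N -> (j <= l + m)%N -> i != j ->
           forall s t, s \in W i -> t \in W j -> b s t = 0)] /\
    [/\ (forall s, s \in W 0%N <-> (forall t, b s t = 0)) &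
        (forall i, (1 <= i <= l + m)%N -> forall s, s \in W i ->
           (forall t, t \in W i -> b s t = 0) -> s = 0)] /\
    [/\ (forall i, (1 <= i <= l)%N -> irreducible rho (W i)) &
        (forall j, (l < j <= l + m)%N -> exists X X' : {vspace vT},
           [/\ irreducible rho X, irreducible rho X', isotropic b X &
               isotropic b X'] /\ (X + X')%VS = W j /\ (X :&: X')%VS = 0%VS)] /\
    (forall U : {vspace vT}, irreducible rho U ->
       (U <= \sum_(l.+1 <= j < (l + m).+1) W j)%VS -> isotropic b U).
Proof.
pose W0 := lorth fullv.
have W0P s : s \in W0 <-> forall t, b s t = 0.
  rewrite mem_lorth; split => H t; last by rewrite bsym H.
  by rewrite bsym H ?memvf.
have sW0 : submodule rho W0 by apply: lorth_sub; apply: sub_full.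
have [N0 [sN0 eN0 cN0]] := compl sW0 sub_full (subvf _).
have nN0 : nondeg N0.
  move=> x xN0 Hx; apply/eqP; rewrite -memv0 -cN0 memv_cap xN0 andbT.
  apply/W0P => t; have : t \in (W0 + N0)%VS by rewrite eN0 memvf.
  move=> /memv_addP[u uW0 [v vN0 ->]].
  by rewrite bDr (Hx v vN0) addr0 bsym; move/W0P: uW0 => ->.
have [Ss [N1 [oSs iSs eS [sN1 nN1 qN1] oN1]]] := phase1 sN0 nN0.
have [Hs [oHs hHs eHs]] := phase2 sN1 nN1 qN1.
pose L := Ss ++ Hs.
pose W i := if i is i'.+1 then nth 0%VS L i' else W0.
exists (size Ss), (size Hs), W.
have HsN1 j : (j < size Hs)%N -> (nth 0%VS Hs j <= N1)%VS.
  by move=> lt; rewrite -eHs; apply: nth_le_sum.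
have oL : odecomp L.
  case: oSs => h1 h2; case: oHs => g1 g2; split.
    move=> i; rewrite size_cat nth_cat; case: ifP => [lt _|le lt]; first exact: h1.
    apply: g1; rewrite -(ltn_add2l (size Ss)) subnKC //; by rewrite leqNgt le.
  move=> i j; rewrite size_cat !nth_cat.
  case: ifP => li; case: ifP => lj il jl ne s t.
  - by apply: h2.
  - have hj : (j - size Ss < size Hs)%N.
      by rewrite -(ltn_add2l (size Ss)) subnKC // leqNgt lj.
    move=> si tj; apply: (oN1 _ li s t si); exact: (subvP (HsN1 _ hj)).
  - have hi : (i - size Ss < size Hs)%N.
      by rewrite -(ltn_add2l (size Ss)) subnKC // leqNgt li.
    move=> si tj; rewrite bsym; apply: (oN1 _ lj t s tj); exact: (subvP (HsN1 _ hi)).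
  - have li' : (size Ss <= i)%N by rewrite leqNgt li.
    have lj' : (size Ss <= j)%N by rewrite leqNgt lj.
    apply: g2.
    + by rewrite -(ltn_add2l (size Ss)) subnKC.
    + by rewrite -(ltn_add2l (size Ss)) subnKC.
    + apply: contra ne => /eqP e; apply/eqP.
      by rewrite -(subnK li') -(subnK lj') e.
have sumL : (\sum_(X <- L) X)%VS = N0 by rewrite big_cat /= eHs eS.
have sumW : (\sum_(i < (size Ss + size Hs).+1) W i)%VS = fullv.
  rewrite big_ord_recl /= -size_cat -/L.
  have -> : (\sum_(i < size L) W (bump 0 i))%VS = (\sum_(X <- L) X)%VS.
    by rewrite (big_nth 0%VS) big_mkord.
  by rewrite sumL.
have orthW i j : (i <= size Ss + size Hs)%N -> (j <= size Ss + size Hs)%N -> i != j ->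
    forall s t, s \in W i -> t \in W j -> b s t = 0.
  case: i => [|i]; case: j => [|j] //= li lj ne s t.
  - by move=> /W0P H _; rewrite H.
  - by move=> _ /W0P H; rewrite bsym H.
  - by apply: oL.2; rewrite ?size_cat.
have subW i : (i <= size Ss + size Hs)%N -> submodule rho (W i).
  case: i => [|i] //= lt; have li : (i < size L)%N by rewrite size_cat.
  by have [] := oL.1 i li.
have ndW i : (1 <= i <= size Ss + size Hs)%N -> nondeg (W i).
  case: i => [|i] //= lt; have li : (i < size L)%N by rewrite size_cat.
  by have [] := oL.1 i li.
split; [split => // | split; [split => // | split; [split | ]]].
- apply/directv_sum_independent => us usW sum0 i _.
  have key : forall i : 'I_(size Ss + size Hs).+1, i != ord0 -> us i = 0.
    move=> k nk; have k1 : (1 <= k <= size Ss + size Hs)%N.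
      have k0 : val k != 0%N by apply: contra nk => /eqP e; apply/eqP; apply: val_inj.
      by rewrite lt0n k0 /= -ltnS ltn_ord.
    apply: (ndW k k1 _ (usW k isT)) => y yW.
    have h : b (\sum_i us i) y = 0 by rewrite sum0 b0l.
    have h2 : \sum_(i | i != k) b (us i) y = 0.
      apply: big1 => k' nk'; apply: (orthW k' k).
      - by rewrite -ltnS; exact: ltn_ord.
      - by rewrite -ltnS; exact: ltn_ord.
      - by apply: contra nk' => /eqP e; apply/eqP; exact: val_inj.
      - exact: usW.
      - exact: yW.
    by move: h; rewrite bsuml (bigD1 k) //= h2 addr0.
  case: (eqVneq i ord0) => [ei|]; last exact: key.
  have h3 : \sum_(j | j != ord0) us j = 0 by apply: big1 => j nj; exact: key.
  by move: sum0; rewrite (bigD1 ord0) //= h3 addr0 ei.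
- move=> i /andP[i1 il]; case: i i1 il => // i _ il /=.
  rewrite nth_cat il; exact: iSs.
- move=> j /andP[lj jlm]; case: j lj jlm => // j lj jlm /=.
  rewrite nth_cat ltnNge -ltnS lj /=; apply: hHs.
  by rewrite -(ltn_add2l (size Ss)) subnKC // -ltnS.
- move=> U iU UW; apply: (qN1 U iU); apply: (subv_trans UW).
  rewrite big_seq; apply: (big_ind (fun X => (X <= N1)%VS)).
  + exact: sub0v.
  + by move=> x y xN yN; rewrite subv_add xN yN.
  move=> j; rewrite mem_index_iota => /andP[lj jlm].
  case: j lj jlm => // j lj jlm /=.
  rewrite nth_cat ltnNge -ltnS lj /=; apply: HsN1.
  by rewrite -(ltn_add2l (size Ss)) subnKC // -ltnS.
Qed.

End Abs.


Section Sets.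
Variable T : finType.
Implicit Types A B : {set T}.
Lemma symdC A B : symd A B = symd B A.
Proof. by rewrite /symd setUC. Qed.
Lemma symdK A B : symd (symd A B) B = A.
Proof.
apply/setP => x; rewrite /symd !inE.
by case: (x \in A); case: (x \in B).
Qed.
Lemma symdKl A B : symd B (symd A B) = A.
Proof. by rewrite symdC symdK. Qed.
Lemma symdd A : symd A A = set0.
Proof. by rewrite /symd setDv setU0. Qed.
Lemma symd_sub A (P : {set T}) : (P \subset A) -> symd P (A :\: P) = A.
Proof.
move=> /subsetP sPA; apply/setP => x; rewrite /symd !inE.
case xP: (x \in P); first by rewrite (sPA _ xP).
by case: (x \in A).
Qed.
Lemma card_symd A B : #|symd A B| = (#|A :\: B| + #|B :\: A|)%N.
Proof.
rewrite /symd cardsU.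
have -> : (A :\: B) :&: (B :\: A) = set0.
  by apply/setP => x; rewrite !inE; case: (x \in A); case: (x \in B).
by rewrite cards0 subn0.
Qed.
Lemma even_symd A B : even_set A -> even_set B -> even_set (symd A B).
Proof.
rewrite /even_set card_symd oddD -(cardsID B A) -(cardsID A B) !oddD setIC.
by case: (odd #|B :&: A|); case: (odd #|A :\: B|); case: (odd #|B :\: A|).
Qed.
Lemma even_set0 : even_set (set0 : {set T}).
Proof. by rewrite /even_set cards0. Qed.
Lemma even_pair (a c : T) : a != c -> even_set [set a; c].
Proof. by move=> ne; rewrite /even_set cards2 ne. Qed.
Lemma symd1 (a c : T) : a != c -> symd [set a] [set c] = [set a; c].
Proof.
move=> ne; apply/setP => x; rewrite /symd !inE.
case: (eqVneq x a) => [->|]; first by rewrite ne.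
by case: (x == c).
Qed.
End Sets.

Section Clsign.
Variables (R : realType) (n p : nat).
Implicit Types A B : {set 'I_n}.

Lemma eps_neq0 (i : 'I_n) : eps p i != 0 :> R.
Proof. by rewrite /eps; case: ifP => _; rewrite ?oppr_eq0 oner_eq0. Qed.
Lemma eps2 (i : 'I_n) : eps p i * eps p i = 1 :> R.
Proof. by rewrite /eps; case: ifP => _; rewrite ?mulrNN mulr1. Qed.

Lemma clsign_neq0 A B : clsign p A B != 0 :> R.
Proof.
rewrite /clsign mulf_neq0 ?signr_eq0 //.
by apply/prodf_neq0 => i _; rewrite oppr_eq0 eps_neq0.
Qed.

Lemma clsign_lt A B : (forall x y, x \in A -> y \in B -> (x < y)%N) -> clsign p A B = 1 :> R.
Proof.
move=> H; rewrite /clsign.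
have -> : [set ab : 'I_n * 'I_n | (ab.1 \in A) && (ab.2 \in B) && (ab.2 < ab.1)%N] = set0.
  apply/setP => [[x y]]; rewrite !inE /=.
  case xA: (x \in A); case yB: (y \in B) => //=.
  by rewrite ltnNge ltnW // H.
have -> : A :&: B = set0.
  apply/setP => x; rewrite !inE; case xA: (x \in A); case xB: (x \in B) => //.
  by have := H x x xA xB; rewrite ltnn.
by rewrite cards0 expr0 big_set0 mulr1.
Qed.

Lemma clsign_gt A B : (forall x y, x \in A -> y \in B -> (y < x)%N) ->
  clsign p A B = (-1) ^+ (#|A| * #|B|) :> R.
Proof.
move=> H; rewrite /clsign.
have -> : [set ab : 'I_n * 'I_n | (ab.1 \in A) && (ab.2 \in B) && (ab.2 < ab.1)%N] = setX A B.
  apply/setP => [[x y]]; rewrite !inE /=.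
  case xA: (x \in A); case yB: (y \in B) => //=.
  by rewrite H.
have -> : A :&: B = set0.
  apply/setP => x; rewrite !inE; case xA: (x \in A); case xB: (x \in B) => //.
  by have := H x x xA xB; rewrite ltnn.
by rewrite cardsX big_set0 mulr1.
Qed.

Lemma clsign_pair_lt (a c : 'I_n) : (a < c)%N -> clsign p [set a] [set c] = 1 :> R.
Proof. by move=> lt; apply: clsign_lt => x y; rewrite !inE => /eqP -> /eqP ->. Qed.
Lemma clsign_pair_gt (a c : 'I_n) : (a < c)%N -> clsign p [set c] [set a] = -1 :> R.
Proof.
move=> lt; rewrite clsign_gt ?cards1 ?expr1 // => x y.
by rewrite !inE => /eqP -> /eqP ->.
Qed.

Lemma clsign_PP (a c : 'I_n) : (a < c)%N ->
  clsign p [set a; c] [set a; c] = - (eps p a * eps p c) :> R.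
Proof.
move=> lt; have ne : a != c by rewrite neq_ltn lt.
rewrite /clsign.
have -> : [set ab : 'I_n * 'I_n | (ab.1 \in [set a; c]) && (ab.2 \in [set a; c]) &&
           (ab.2 < ab.1)%N] = [set (c, a)].
  apply/setP => [[x y]]; rewrite !inE /= xpair_eqE.
  have ca : (c == a) = false by rewrite eq_sym (negbTE ne).
  have nca : (c < a)%N = false by rewrite ltnNge ltnW.
  have ac : (a == c) = false by rewrite (negbTE ne).
  case: (eqVneq x a) => [->|xa].
    case: (eqVneq y a) => [->|ya]; first by rewrite ?ltnn ?nca ?lt ?ac ?ca ?eqxx /= ?andbF ?andbT ?orbT ?orbF.
    case: (eqVneq y c) => [->|yc]; first by rewrite ?ltnn ?nca ?lt ?ac ?ca ?eqxx /= ?andbF ?andbT ?orbT ?orbF.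
    rewrite ?(negbTE ya) ?(negbTE yc); by rewrite ?ltnn ?nca ?lt ?ac ?ca ?eqxx /= ?andbF ?andbT ?orbT ?orbF.
  case: (eqVneq x c) => [->|xc].
    case: (eqVneq y a) => [->|ya]; first by rewrite ?ltnn ?nca ?lt ?ac ?ca ?eqxx /= ?andbF ?andbT ?orbT ?orbF.
    case: (eqVneq y c) => [->|yc]; first by rewrite ?ltnn ?nca ?lt ?ac ?ca ?eqxx /= ?andbF ?andbT ?orbT ?orbF.
    rewrite ?(negbTE ya) ?(negbTE yc); by rewrite ?ltnn ?nca ?lt ?ac ?ca ?eqxx /= ?andbF ?andbT ?orbT ?orbF.
  rewrite ?(negbTE xa) ?(negbTE xc); by rewrite ?ltnn ?nca ?lt ?ac ?ca ?eqxx /= ?andbF ?andbT ?orbT ?orbF.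
rewrite cards1 expr1 setIid big_setU1 /= ?inE // big_set1.
by rewrite mulrNN mulN1r.
Qed.
End Clsign.




Section Mod.
Variables (R : realType) (n p : nat) (vT : vectType R).
Variable rho : {set 'I_n} -> vT -> vT.
Variable Pi : vT -> vT -> 'rV[R]_n.
Hypothesis HM : is_Cl0_module p rho.
Hypothesis HP : is_equivariant_Pi p rho Pi.

Lemma rho_lin A : even_set A -> forall a u v, rho A (a *: u + v) = a *: rho A u + rho A v.
Proof. by case: HM => H _ _; apply: H. Qed.
Lemma rho_set0 v : rho set0 v = v.
Proof. by case: HM => _ H _; apply: H. Qed.
Lemma rho_mul A B : even_set A -> even_set B -> forall v,
  rho A (rho B v) = clsign p A B *: rho (symd A B) v.
Proof. by case: HM => _ _ H; apply: H. Qed.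
Lemma rho0 A : even_set A -> rho A 0 = 0.
Proof.
move=> eA; have := rho_lin eA 1 0 0; rewrite !scale1r addr0 => h.
by apply: (addrI (rho A 0)); rewrite addr0 -h.
Qed.
Lemma rhoD A : even_set A -> forall u v, rho A (u + v) = rho A u + rho A v.
Proof. by move=> eA u v; have := rho_lin eA 1 u v; rewrite !scale1r. Qed.
Lemma rhoZ A : even_set A -> forall a u, rho A (a *: u) = a *: rho A u.
Proof. by move=> eA a u; have := rho_lin eA a u 0; rewrite !addr0 rho0 // addr0. Qed.
Lemma rho_sum A : even_set A -> forall I (r : seq I) (P : pred I) (F : I -> vT),
  rho A (\sum_(i <- r | P i) F i) = \sum_(i <- r | P i) rho A (F i).
Proof.
move=> eA I r P F.
have h := lfunE' (rho_lin eA).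
by rewrite -h linear_sum; apply: eq_bigr => i _; apply: h.
Qed.

Lemma Pi_l a s s' t : Pi (a *: s + s') t = a *: Pi s t + Pi s' t.
Proof. by case: HP => H _ _ _; apply: H. Qed.
Lemma Pi_r a s t t' : Pi s (a *: t + t') = a *: Pi s t + Pi s t'.
Proof. by case: HP => _ H _ _; apply: H. Qed.
Lemma Pi_ss s : Pi s s = 0.
Proof. by case: HP => _ _ H _; apply: H. Qed.
Lemma Pi_equiv x y s t : Pi (spin_act p rho x y s) t + Pi s (spin_act p rho x y t)
   = oV_act p x y (Pi s t).
Proof. by case: HP => _ _ _ H; apply: H. Qed.

Lemma Pi0l t : Pi 0 t = 0.
Proof.
have := Pi_l 1 0 0 t; rewrite !scale1r addr0 => h.
by apply: (addrI (Pi 0 t)); rewrite addr0 -h.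
Qed.
Lemma Pi0r s : Pi s 0 = 0.
Proof.
have := Pi_r 1 s 0 0; rewrite !scale1r addr0 => h.
by apply: (addrI (Pi s 0)); rewrite addr0 -h.
Qed.
Lemma PiDl s s' t : Pi (s + s') t = Pi s t + Pi s' t.
Proof. by have := Pi_l 1 s s' t; rewrite !scale1r. Qed.
Lemma PiDr s t t' : Pi s (t + t') = Pi s t + Pi s t'.
Proof. by have := Pi_r 1 s t t'; rewrite !scale1r. Qed.
Lemma PiZl a s t : Pi (a *: s) t = a *: Pi s t.
Proof. by have := Pi_l a s 0 t; rewrite !addr0 Pi0l addr0. Qed.
Lemma PiZr a s t : Pi s (a *: t) = a *: Pi s t.
Proof. by have := Pi_r a s t 0; rewrite !addr0 Pi0r addr0. Qed.
Lemma Pi_skew s t : Pi s t = - Pi t s.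
Proof.
have := Pi_ss (s + t); rewrite PiDl !PiDr !Pi_ss add0r addr0 => /eqP.
by rewrite addr_eq0 => /eqP.
Qed.

Definition dl (k : 'I_n) : 'rV[R]_n := delta_mx 0 k.

Lemma dlE (k j : 'I_n) : dl k 0 j = (j == k)%:R.
Proof. by rewrite /dl mxE eqxx. Qed.

Lemma ip_dl k z : ip p (dl k) z = eps p k * z 0 k.
Proof.
rewrite /ip (bigD1 k) //= big1 ?addr0; first by rewrite dlE eqxx mulr1.
by move=> i ik; rewrite dlE (negbTE ik) mulr0 mul0r.
Qed.

Lemma sum_dl2 (a c : 'I_n) (F : 'I_n -> 'I_n -> vT) :
  \sum_(i < n) \sum_(j < n) (dl a 0 i * dl c 0 j) *: F i j = F a c.
Proof.
have h1 : \sum_(i < n | i != a) \sum_(j < n) (dl a 0 i * dl c 0 j) *: F i j = 0.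
  apply: big1 => i ia; apply: big1 => j _.
  by rewrite dlE (negbTE ia) mul0r scale0r.
have h2 : \sum_(j < n | j != c) (dl a 0 a * dl c 0 j) *: F a j = 0.
  by apply: big1 => j jc; rewrite !dlE (negbTE jc) mulr0 scale0r.
rewrite (bigD1 a) //= h1 addr0 (bigD1 c) //= h2 addr0.
by rewrite !dlE !eqxx mulr1 scale1r.
Qed.

Lemma spin_dl (a c : 'I_n) s : (a < c)%N ->
  spin_act p rho (dl a) (dl c) s = - 2^-1 *: rho [set a; c] s.
Proof.
move=> lt; have ne : a != c by rewrite neq_ltn lt.
have e : [set c; a] = [set a; c] by apply/setP => x; rewrite !inE orbC.
rewrite /spin_act sum_dl2 /cl2 clsign_pair_lt // clsign_pair_gt //.
rewrite symd1 // symd1 1?eq_sym // e scale1r scaleN1r opprK.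
rewrite -mulr2n -scaler_nat scalerA; congr (_ *: _).
have h2 : (2 : R) != 0 by rewrite pnatr_eq0.
have -> : (4%:R : R) = 2 * 2 by rewrite -natrM.
by field.
Qed.

Lemma oV_dl (a c : 'I_n) z : oV_act p (dl a) (dl c) z =
  (eps p c * z 0 c) *: dl a - (eps p a * z 0 a) *: dl c.
Proof. by rewrite /oV_act !ip_dl. Qed.

Lemma equiv_dl (a c : 'I_n) s t : (a < c)%N ->
  Pi (rho [set a; c] s) t + Pi s (rho [set a; c] t) =
  (-2) *: oV_act p (dl a) (dl c) (Pi s t).
Proof.
move=> lt; rewrite -Pi_equiv !spin_dl // PiZl PiZr -scalerDr scalerA.
have h2 : (2 : R) != 0 by rewrite pnatr_eq0.
have -> : (-2) * - 2^-1 = 1 :> R by field.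
by rewrite scale1r.
Qed.

Lemma comp_dl (a c k : 'I_n) s t : (a < c)%N ->
  (Pi (rho [set a; c] s) t) 0 k + (Pi s (rho [set a; c] t)) 0 k =
  -2 * (eps p c * (Pi s t) 0 c * (k == a)%:R - eps p a * (Pi s t) 0 a * (k == c)%:R).
Proof.
move=> lt; have := congr1 (fun v : 'rV[R]_n => v 0 k) (equiv_dl s t lt).
by rewrite /= oV_dl !mxE ?dlE ?eqxx /=.
Qed.

Lemma L2 (a c k : 'I_n) s t : (a < c)%N -> k != a -> k != c ->
  (Pi (rho [set a; c] s) t) 0 k = - (Pi s (rho [set a; c] t)) 0 k.
Proof.
move=> lt ka kc; have := comp_dl k s t lt.
rewrite (negbTE ka) (negbTE kc) !mulr0 subrr mulr0 => /eqP.
by rewrite addr_eq0 => /eqP.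
Qed.

Variable i0 : 'I_n.
Hypothesis i0E : val i0 = 0%N.
Hypothesis p_gt0 : (0 < p)%N.

Lemma eps_i0 : eps p i0 = 1 :> R.
Proof. by rewrite /eps i0E p_gt0. Qed.

Definition f0 s t := (Pi s t) 0 i0.

Lemma L3 (c : 'I_n) s t : (0 < c)%N ->
  f0 (rho [set i0; c] s) t = f0 s (rho [set i0; c] t).
Proof.
move=> c0; have lt : (i0 < c)%N by rewrite i0E.
have ne : c != i0 by rewrite neq_ltn lt orbT.
set P := [set i0; c].
have eP : even_set P by apply: even_pair; rewrite eq_sym.
set e := (@eps R p n c).
have e2 : e * e = 1 by apply: eps2.
have rr v : rho P (rho P v) = (- e) *: v.
  by rewrite rho_mul // symdd rho_set0 clsign_PP // eps_i0 mul1r.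
have A u v : f0 (rho P u) v + f0 u (rho P v) = -2 * e * (Pi u v) 0 c.
  have ic : (i0 == c) = false by rewrite eq_sym (negbTE ne).
  rewrite /f0 comp_dl // eqxx ic eps_i0 /= mulr1 mulr0 -/e; ring.
have B u v : (Pi (rho P u) v) 0 c + (Pi u (rho P v)) 0 c = 2 * f0 u v.
  rewrite /f0 comp_dl // eqxx (negbTE ne) eps_i0 /= mulr1 mulr0 -/e; ring.
have key u v : f0 (rho P u) (rho P v) = - e * f0 u v.
  have h1 := A (rho P u) v; rewrite rr /f0 PiZl mxE in h1.
  have h2 := A u (rho P v); rewrite rr /f0 PiZr mxE in h2.
  have hB := B u v; rewrite /f0 in hB.
  rewrite /f0.
  set X := Pi u v 0 i0 in h1 h2 hB *.
  set Y := Pi (rho P u) (rho P v) 0 i0 in h1 h2 *.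
  set g1 := Pi (rho P u) v 0 c in h1 hB.
  set g2 := Pi u (rho P v) 0 c in h2 hB.
  have h2' : (2 : R) != 0 by rewrite pnatr_eq0.
  apply: (mulfI h2').
  have -> : 2 * Y = (- e * X + Y) + (Y + - e * X) + 2 * e * X by ring.
  rewrite h1 h2.
  have -> : -2 * e * g1 + -2 * e * g2 + 2 * e * X = -2 * e * (g1 + g2) + 2 * e * X by ring.
  rewrite hB; ring.
have := key s (rho P t); rewrite rr /f0 PiZr mxE => h.
have : - e * (Pi (rho P s) t) 0 i0 = - e * (Pi s (rho P t)) 0 i0.
  by rewrite -h.
have ne0 : - e != 0 by rewrite oppr_eq0 eps_neq0.
by move/(mulfI ne0).
Qed.

Lemma f0Zl a u v : f0 (a *: u) v = a * f0 u v.
Proof. by rewrite /f0 PiZl mxE. Qed.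
Lemma f0Zr a u v : f0 u (a *: v) = a * f0 u v.
Proof. by rewrite /f0 PiZr mxE. Qed.

Lemma Comp (c : 'I_n) s t : (0 < c)%N ->
  (Pi s t) 0 c = - eps p c * f0 (rho [set i0; c] s) t.
Proof.
move=> c0; have lt : (i0 < c)%N by rewrite i0E.
have ne : c != i0 by rewrite neq_ltn lt orbT.
have ic : (i0 == c) = false by rewrite eq_sym (negbTE ne).
have := comp_dl i0 s t lt; rewrite eqxx ic eps_i0 /= mulr1 mulr0.
rewrite -/(f0 _ _) -/(f0 _ _) -L3 // => h.
have e2 : eps p c * eps p c = 1 :> R by apply: eps2.
have h2' : (2 : R) != 0 by rewrite pnatr_eq0.
set e := (@eps R p n c) in h e2 *.
set X := f0 (rho [set i0; c] s) t in h *.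
set Y := Pi s t 0 c in h *.
have -> : Y = - e * (- e * Y) by rewrite mulrA mulrNN e2 mul1r.
congr (_ * _); apply: (mulfI h2').
have -> : 2 * X = X + X by ring.
rewrite h; ring.
Qed.

Definition Iv (a k : nat) : {set 'I_n} := [set j : 'I_n | (a <= j < a + k.*2)%N].

Lemma Iv_prop k a : (0 < a)%N -> (a + k.*2 <= n)%N ->
  even_set (Iv a k) /\
  forall x t, f0 (rho (Iv a k) x) t = (-1) ^+ k * f0 x (rho (Iv a k) t).
Proof.
elim: k a => [|k IH] a a0 an.
  have -> : Iv a 0 = set0 by apply/setP => j; rewrite !inE addn0; lia.
  by split; [apply: even_set0 | move=> x t; rewrite !rho_set0 expr0 mul1r].
have an2 : (a.+2 + k.*2 <= n)%N by move: an; rewrite doubleS; lia.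
have [eI' HI'] := IH a.+2 isT an2.
have la : (a < n)%N by lia.
have lb : (a.+1 < n)%N by lia.
pose ia := Ordinal la; pose ib := Ordinal lb.
have ltab : (ia < ib)%N by rewrite /= ltnSn.
have neab : ia != ib by rewrite neq_ltn ltab.
set P := [set ia; ib]; set I' := Iv a.+2 k.
have eP : even_set P by apply: even_pair.
have eIv : Iv a k.+1 = symd P I'.
  apply/setP => j; rewrite /symd !inE -!val_eqE /=.
  apply/idP/idP; lia.
have c1 : clsign p P I' = 1 :> R.
  apply: clsign_lt => x y; rewrite !inE -!val_eqE /=; lia.
have c2 : clsign p I' P = 1 :> R.
  rewrite clsign_gt; last by move=> x y; rewrite !inE -!val_eqE /=; lia.
  by rewrite /P cards2 neab mulnC exprM sqrrN expr1n expr1n.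
have r1 v : rho (Iv a k.+1) v = rho P (rho I' v) by rewrite rho_mul // c1 scale1r eIv.
have r2 v : rho (Iv a k.+1) v = rho I' (rho P v) by rewrite rho_mul // c2 scale1r eIv symdC.
split; first by rewrite eIv; apply: even_symd.
move=> x t; rewrite r1 r2 /f0 (L2 _ _ ltab); last 2 first.
- by rewrite -val_eqE /= i0E; lia.
- by rewrite -val_eqE /= i0E; lia.
by rewrite -/(f0 _ _) HI' /f0 exprS; ring.
Qed.

Variable p' : nat.
Hypothesis p'4 : (p' %% 4 = 3)%N.
Hypothesis p'n : (p' <= n)%N.

Definition Fset : {set 'I_n} := [set j : 'I_n | (0 < j < p')%N].

Lemma F_prop : even_set Fset /\ forall x t, f0 (rho Fset x) t = - f0 x (rho Fset t).
Proof.
have [k [pk ok]] : exists k, p' = 1 + k.*2 /\ odd k.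
  by exists (p' %/ 4).*2.+1; split; [lia | rewrite /= odd_double].
have eF : Fset = Iv 1 k by apply/setP => j; rewrite !inE; lia.
have k1 : (1 + k.*2 <= n)%N by lia.
have [e H] := Iv_prop (a := 1) isT k1.
rewrite eF; split => // x t; rewrite H -signr_odd ok expr1 mulN1r.
by [].
Qed.

Let bb := bform p' p rho Pi.

Lemma even_F : even_set Fset. Proof. by case: F_prop. Qed.

Lemma bbE s t : bb s t = f0 (rho Fset s) t.
Proof.
rewrite /bb /bform.
have -> : (e_first : 'rV[R]_n) = dl i0.
  by apply/rowP => j; rewrite dlE mxE -val_eqE i0E.
by rewrite ip_dl eps_i0 mul1r.
Qed.

Lemma bb_l a s s' t : bb (a *: s + s') t = a * bb s t + bb s' t.
Proof. by rewrite !bbE rho_lin ?even_F // /f0 Pi_l !mxE. Qed.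
Lemma bbZr a s t : bb s (a *: t) = a * bb s t.
Proof. by rewrite !bbE /f0 PiZr mxE. Qed.
Lemma bbZl a s t : bb (a *: s) t = a * bb s t.
Proof. by rewrite !bbE rhoZ ?even_F // /f0 PiZl mxE. Qed.
Lemma bb_sym s t : bb s t = bb t s.
Proof.
rewrite !bbE /f0 (Pi_skew (rho Fset t)) mxE.
have [_ H] := F_prop; by rewrite -/(f0 _ _) H.
Qed.

Lemma bb_pair (a c : 'I_n) : (a < c)%N ->
  exists nu, forall s t, bb s (rho [set a; c] t) = nu * bb (rho [set a; c] s) t.
Proof.
move=> lt; have ne : a != c by rewrite neq_ltn lt.
set P := [set a; c].
have eP : even_set P by apply: even_pair.
have eF := even_F.
have hk v : rho Fset (rho P v) =
    (clsign p Fset P / clsign p P Fset) *: rho P (rho Fset v).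
  rewrite rho_mul // [in RHS]rho_mul // symdC scalerA mulfVK //.
  exact: clsign_neq0.
have [sig hsig] : exists sig : R, sig != 0 /\ forall u v, f0 (rho P u) v = sig * f0 u (rho P v).
  case: (eqVneq (val a) 0%N) => [a0|a0].
    have ea : a = i0 by apply: val_inj; rewrite a0 i0E.
    exists 1; split; first exact: oner_neq0.
    move=> u v; rewrite mul1r /P ea; apply: L3; by move: lt; rewrite a0.
  exists (-1); split; first by rewrite oppr_eq0 oner_neq0.
  move=> u v; rewrite mulN1r /f0; apply: L2 => //.
    by rewrite -val_eqE /= i0E eq_sym.
  by rewrite -val_eqE /= i0E; move: lt; rewrite neq_ltn; case: (val c) => //.
set kap := (@clsign R p n Fset P / clsign p P Fset).
have kap0 : kap != 0 by rewrite mulf_neq0 ?invr_eq0 ?clsign_neq0.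
exists (kap * sig)^-1 => s t.
rewrite !bbE hk f0Zl (proj2 hsig) (mulrA kap) mulKf //.
by rewrite mulf_neq0 // (proj1 hsig).
Qed.

Lemma bb_pair2 (x y : 'I_n) : x != y ->
  exists nu, forall s t, bb s (rho [set x; y] t) = nu * bb (rho [set x; y] s) t.
Proof.
move=> ne; case: (ltngtP x y) => h.
- exact: bb_pair.
- have -> : [set x; y] = [set y; x] by apply/setP => z; rewrite !inE orbC.
  exact: bb_pair.
- by move: ne; rewrite (val_inj h) eqxx.
Qed.

Lemma bb_inv A : even_set A ->
  exists nu, forall s t, bb s (rho A t) = nu * bb (rho A s) t.
Proof.
have [k] := ubnP #|A|; elim: k A => // k IH A ltA eA.
case: (set_0Vmem A) => [->|[x xA]].
  by exists 1 => s t; rewrite !rho_set0 mul1r.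
have cA := cardsD1 x A; rewrite xA /= in cA.
have [y yA] : exists y, y \in A :\ x.
  apply/card_gt0P; move: eA; rewrite /even_set cA /=.
  by case: #|A :\ x|.
move: yA; rewrite !inE => /andP[yx yA].
have ne : x != y by rewrite eq_sym.
set P := [set x; y].
have PA : P \subset A by apply/subsetP => z; rewrite !inE => /orP[] /eqP ->.
have eP : even_set P by apply: even_pair.
set A' := A :\: P.
have cAP : #|A| = (#|A'| + 2)%N.
  rewrite -(cardsID P A) addnC; congr (_ + _)%N.
  by rewrite (setIidPr PA) cards2 ne.
have eA' : even_set A' by move: eA; rewrite /even_set cAP oddD /= addbF.
have ltA' : (#|A'| < k)%N by move: ltA; rewrite cAP; lia.
have [nu' Hnu'] := IH A' ltA' eA'.
have [nuP HnuP] := bb_pair2 ne.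
have r1 v : rho P (rho A' v) = clsign p P A' *: rho A v.
  by rewrite rho_mul // symd_sub.
have r2 v : rho A' (rho P v) = clsign p A' P *: rho A v.
  by rewrite rho_mul // symdC symd_sub.
have c10 : clsign p P A' != 0 :> R by apply: clsign_neq0.
exists ((clsign p P A')^-1 * nuP * nu' * clsign p A' P) => s t.
have -> : rho A t = (clsign p P A')^-1 *: rho P (rho A' t).
  by rewrite r1 scalerA mulVf // scale1r.
by rewrite bbZr HnuP Hnu' r2 bbZl !mulrA.
Qed.

Lemma f0_zero (U : {vspace vT}) s t : submodule rho U -> s \in U ->
  (forall u, u \in U -> bb u t = 0) -> f0 s t = 0.
Proof.
move=> sU sUs H.
have eF := even_F.
have : rho Fset (rho Fset s) = clsign p Fset Fset *: s by rewrite rho_mul // symdd rho_set0.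
move=> h; have c0 : clsign p Fset Fset != 0 :> R by apply: clsign_neq0.
have : f0 (rho Fset (rho Fset s)) t = 0 by rewrite -bbE H // sU.
by rewrite h /f0 PiZl mxE => /eqP; rewrite mulf_eq0 (negbTE c0) /= => /eqP.
Qed.

Lemma Pi_orth (U : {vspace vT}) s t : submodule rho U -> s \in U ->
  (forall u, u \in U -> bb u t = 0) -> Pi s t = 0.
Proof.
move=> sU sUs H; apply/rowP => j; rewrite mxE.
case: (eqVneq (val j) 0%N) => [j0|j0].
  have -> : j = i0 by apply: val_inj; rewrite j0 i0E.
  exact: (f0_zero sU sUs H).
have jp : (0 < j)%N by rewrite lt0n.
rewrite Comp // (f0_zero sU _ H) ?mulr0 //.
apply: sU => //; apply: even_pair.
by rewrite -val_eqE /= i0E eq_sym.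
Qed.

Section Span.
Variable U : {vspace vT}.
Hypothesis sU : submodule rho U.

Definition SP (v : 'rV[R]_n) := exists l : seq (vT * vT),
  (forall x, x \in l -> x.1 \in U /\ x.2 \in U) /\ v = \sum_(x <- l) Pi x.1 x.2.

Lemma SP0 : SP 0.
Proof. by exists [::]; split => //; rewrite big_nil. Qed.

Lemma SPD v w : SP v -> SP w -> SP (v + w).
Proof.
move=> [l1 [h1 ->]] [l2 [h2 ->]]; exists (l1 ++ l2); split; last by rewrite big_cat.
by move=> x; rewrite mem_cat => /orP[/h1|/h2].
Qed.

Lemma SPZ a v : SP v -> SP (a *: v).
Proof.
move=> [l [h ->]]; exists (map (fun x => (a *: x.1, x.2)) l); split.
  move=> x /mapP[y yl ->] /=; have [h1 h2] := h y yl; by rewrite memvZ.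
by rewrite big_map scaler_sumr; apply: eq_bigr => x _; rewrite PiZl.
Qed.

Lemma SPsum I (r : seq I) (P : pred I) (F : I -> 'rV[R]_n) :
  (forall i, P i -> SP (F i)) -> SP (\sum_(i <- r | P i) F i).
Proof. by move=> H; apply: big_ind => //; [exact: SP0 | exact: SPD]. Qed.

Lemma oV_sum (a c : 'I_n) I (r : seq I) (F : I -> 'rV[R]_n) :
  oV_act p (dl a) (dl c) (\sum_(i <- r) F i) = \sum_(i <- r) oV_act p (dl a) (dl c) (F i).
Proof.
rewrite oV_dl !summxE mulr_sumr mulr_sumr !scaler_suml -sumrB.
by apply: eq_bigr => i _; rewrite oV_dl.
Qed.

Lemma SPT (a c : 'I_n) z : (a < c)%N -> SP z -> SP (oV_act p (dl a) (dl c) z).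
Proof.
move=> lt [l [h ->]].
set sp := spin_act p rho (dl a) (dl c).
have spU u : u \in U -> sp u \in U.
  move=> uU; rewrite /sp spin_dl // memvZ // sU //.
  by apply: even_pair; rewrite neq_ltn lt.
exists (map (fun x => (sp x.1, x.2)) l ++ map (fun x => (x.1, sp x.2)) l); split.
  move=> x; rewrite mem_cat => /orP[] /mapP[y yl ->] /=; have [h1 h2] := h y yl.
    by rewrite spU.
  by rewrite spU.
rewrite oV_sum big_cat !big_map /= -big_split /=.
by apply: eq_bigr => x _; rewrite -Pi_equiv.
Qed.

Lemma SPproj (a c : 'I_n) z : (a < c)%N -> SP z -> SP (z 0 a *: dl a + z 0 c *: dl c).
Proof.
move=> lt Sz; have ne : a != c by rewrite neq_ltn lt.
have ac : (a == c) = false by rewrite (negbTE ne).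
have ca : (c == a) = false by rewrite eq_sym (negbTE ne).
have -> : z 0 a *: dl a + z 0 c *: dl c =
    (- (eps p a * eps p c)) *: oV_act p (dl a) (dl c) (oV_act p (dl a) (dl c) z).
  have ea : eps p a * eps p a = 1 :> R by apply: eps2.
  have ec : eps p c * eps p c = 1 :> R by apply: eps2.
  apply/rowP => j; rewrite !oV_dl !mxE ?dlE ?ac ?ca ?eqxx /= ?ac ?ca.
  by case: (j == a); case: (j == c); rewrite /=; ring: ea ec.
by apply: SPZ; apply: SPT => //; apply: SPT.
Qed.

Hypothesis n3 : (3 <= n)%N.

Lemma SP_all s t : s \in U -> t \in U -> bb s t != 0 -> forall v, SP v.
Proof.
move=> sUs tU b0 v.
have l1 : (1 < n)%N by lia.
have l2 : (2 < n)%N by lia.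
pose i1 := Ordinal l1; pose i2 := Ordinal l2.
have eF := even_F.
set z := Pi (rho Fset s) t.
have Sz : SP z.
  exists [:: (rho Fset s, t)]; split; last by rewrite big_seq1.
  by move=> x; rewrite inE => /eqP -> /=; rewrite sU.
have z0 : z 0 i0 = bb s t by rewrite bbE.
have lt01 : (i0 < i1)%N by rewrite i0E.
have lt02 : (i0 < i2)%N by rewrite i0E.
have S1 := SPproj lt01 Sz.
have S2 := SPproj lt02 S1.
have e2 : (z 0 i0 *: dl i0 + z 0 i1 *: dl i1) 0 i2 = 0.
  rewrite !mxE -!val_eqE /= ?i0E /=; ring.
have e0 : (z 0 i0 *: dl i0 + z 0 i1 *: dl i1) 0 i0 = z 0 i0.
  rewrite !mxE -!val_eqE /= ?i0E /=; ring.
rewrite e2 e0 scale0r addr0 in S2.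
have Sd0 : SP (dl i0).
  have := SPZ (z 0 i0)^-1 S2; rewrite scalerA mulVf ?scale1r // z0 //.
have Sdj j : SP (dl j).
  case: (eqVneq (val j) 0%N) => [j0|j0].
    by have -> : j = i0 by apply: val_inj; rewrite j0 i0E.
  have lt : (i0 < j)%N by rewrite i0E lt0n.
  have := SPZ (-1) (SPT lt Sd0); congr SP.
  have ji : (j == i0) = false by apply/negbTE; rewrite -val_eqE /= i0E.
  rewrite oV_dl !dlE ji eqxx eps_i0 mulr0 scale0r sub0r mul1r scale1r.
  by rewrite scaleN1r opprK.
rewrite (row_sum_delta v); apply: SPsum => j _; apply: SPZ; exact: Sdj.
Qed.

End Span.

Lemma PiSpan (U : {vspace vT}) s t : submodule rho U -> (3 <= n)%N ->
  s \in U -> t \in U -> bb s t != 0 -> forall v : 'rV[R]_n,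
  exists k (ss ts : 'I_k -> vT),
    (forall r, ss r \in U /\ ts r \in U) /\ v = \sum_(r < k) Pi (ss r) (ts r).
Proof.
move=> sU n3 sUs tU b0 v.
have [l [h e]] := SP_all sU n3 sUs tU b0 v.
exists (size l), (fun r => (nth (0, 0) l r).1), (fun r => (nth (0, 0) l r).2).
split; first by move=> r; apply: h; apply: mem_nth.
by rewrite e (big_nth (0, 0)) big_mkord.
Qed.

Definition Ne := #|[pred A : {set 'I_n} | even_set A]|.

Lemma Ne_neq0 : (Ne%:R : R) != 0.
Proof.
rewrite pnatr_eq0 -lt0n; apply/card_gt0P; exists set0.
by rewrite inE; apply: even_set0.
Qed.

Definition Qfun (U : {vspace vT}) (x : vT) : vT :=
  (Ne%:R)^-1 *: \sum_(A | even_set A) (clsign p A A)^-1 *: rho A (projv U (rho A x)).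

Lemma Qfun_lin U a u v : Qfun U (a *: u + v) = a *: Qfun U u + Qfun U v.
Proof.
rewrite /Qfun scalerA mulrC -scalerA -scalerDr; congr (_ *: _).
rewrite scaler_sumr -big_split /=; apply: eq_bigr => A eA.
by rewrite rho_lin // linearP rho_lin // scalerDr !scalerA mulrC.
Qed.

Lemma Qfun_in U x : submodule rho U -> Qfun U x \in U.
Proof.
move=> sU; rewrite /Qfun memvZ // memv_suml // => A eA.
by rewrite memvZ // sU // memv_proj.
Qed.

Lemma Qfun_id U u : submodule rho U -> u \in U -> Qfun U u = u.
Proof.
move=> sU uU; rewrite /Qfun.
have -> : \sum_(A | even_set A) (clsign p A A)^-1 *: rho A (projv U (rho A u)) =
          \sum_(A in [pred A : {set 'I_n} | even_set A]) u.
  apply: eq_bigr => A eA; rewrite projv_id ?sU // rho_mul // symdd rho_set0.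
  by rewrite scalerA mulVf ?scale1r // clsign_neq0.
by rewrite sumr_const -scaler_nat scalerA mulVf ?scale1r // Ne_neq0.
Qed.

Lemma Qfun_comm U B x : even_set B -> Qfun U (rho B x) = rho B (Qfun U x).
Proof.
move=> eB; rewrite /Qfun rhoZ // rho_sum //; congr (_ *: _).
have key A : even_set A ->
    (clsign p A A)^-1 *: rho A (projv U (rho A (rho B x))) =
    rho B ((clsign p (symd A B) (symd A B))^-1 *: rho (symd A B)
             (projv U (rho (symd A B) x))).
  move=> eA; set A' := symd A B; have eA' : even_set A' by apply: even_symd.
  set y := projv U (rho A' x).
  set z := (clsign p A' A')^-1 *: rho A' y.
  have hz : rho A' z = y.
    by rewrite /z rhoZ // rho_mul // symdd rho_set0 scalerA mulVf ?scale1r // clsign_neq0.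
  have Hy : rho A (rho B z) = clsign p A B *: y by rewrite rho_mul // hz.
  rewrite rho_mul // -/A' linearZ /= -/y rhoZ // scalerA.
  have -> : (clsign p A A)^-1 * clsign p A B = (clsign p A A)^-1 * clsign p A B by [].
  rewrite -scalerA -rhoZ // -Hy rho_mul // symdd rho_set0 scalerA mulVf ?scale1r //.
  exact: clsign_neq0.
rewrite (eq_bigr _ key).
have hinj : injective (fun A => symd A B).
  by apply: (inv_inj (f := fun A => symd A B)) => A; apply: symdK.
rewrite [RHS](reindex_inj hinj) /=.
apply: eq_bigl => A; apply/idP/idP => h; first exact: even_symd.
by rewrite -(symdK A B); apply: even_symd.
Qed.

Lemma compl_lemma (U M : {vspace vT}) : submodule rho U -> submodule rho M -> (U <= M)%VS ->
  exists U', [/\ submodule rho U', (U + U')%VS = M & (U :&: U')%VS = 0%VS].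
Proof.
move=> sU sM UM.
have [Q QE] : exists Q : 'End(vT), forall x, Q x = Qfun U x.
  by exists (linfun (Qfun U)) => x; rewrite lfunE' //; apply: Qfun_lin.
exists (M :&: lker Q)%VS; split.
- move=> B eB x; rewrite !memv_cap => /andP[xM]; rewrite !memv_ker !QE => /eqP Qx.
  by rewrite (sM B eB x xM) Qfun_comm // Qx (rho0 eB) eqxx.
- apply/eqP; rewrite eqEsubv subv_add UM capvSl /=.
  apply/subvP => m mM; rewrite (_ : m = Qfun U m + (m - Qfun U m)); last first.
    by rewrite addrC subrK.
  rewrite memv_add ?Qfun_in // memv_cap memvB // ?(subvP UM) ?Qfun_in //=.
  have e : m - Qfun U m = (-1) *: Qfun U m + m by rewrite scaleN1r addrC.
  by rewrite memv_ker QE e Qfun_lin (Qfun_id sU (Qfun_in m sU)) scaleN1r addNr.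
- apply/eqP; rewrite -subv0; apply/subvP => x; rewrite !memv_cap memv0.
  move=> /andP[xU /andP[_]]; rewrite memv_ker QE Qfun_id //.
Qed.
End Mod.

Unset Implicit Arguments. Set Strict Implicit. Set Printing Implicit Defensive.

Theorem mainTheorem3 (R : realType) (p' p'' q : nat) (vT : vectType R)
  (rho : {set 'I_(p' + p'' + q)} -> vT -> vT)
  (Pi : vT -> vT -> 'rV[R]_(p' + p'' + q)) :
  (p' %% 4 = 3)%N ->
  is_Cl0_module (p' + p'') rho ->
  is_equivariant_Pi (p' + p'') rho Pi ->
  let b := bform p' (p' + p'') rho Pi in
  exists (l m : nat) (W : nat -> {vspace vT}),
    (* b-orthogonal direct sum decomposition into submodules *)
    [/\ (\sum_(i < (l + m).+1) W i)%VS = fullv,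
        directv (\sum_(i < (l + m).+1) W i),
        (forall i, (i <= l + m)%N -> submodule rho (W i)) &
        (forall i j, (i <= l + m)%N -> (j <= l + m)%N -> i != j ->
           forall s t, s \in W i -> t \in W j -> b s t = 0)] /\
    (* (1) *)
    [/\ (forall s t, s \in W 0%N -> Pi s t = 0),
        (forall i j, (i <= l + m)%N -> (j <= l + m)%N -> i != j ->
           forall s t, s \in W i -> t \in W j -> Pi s t = 0) &
        (forall i, (1 <= i <= l)%N -> forall v : 'rV[R]_(p' + p'' + q),
           exists k (ss ts : 'I_k -> vT),
             (forall r, ss r \in W i /\ ts r \in W i) /\
             v = \sum_(r < k) Pi (ss r) (ts r))] /\
    (* (2) *)
    [/\ (forall s, s \in W 0%N <-> (forall t, b s t = 0)) &
        (forall i, (1 <= i <= l + m)%N -> forall s, s \in W i ->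
           (forall t, t \in W i -> b s t = 0) -> s = 0)] /\
    (* (3) *)
    [/\ (forall i, (1 <= i <= l)%N -> irreducible rho (W i)) &
        (forall j, (l < j <= l + m)%N -> exists X X' : {vspace vT},
           [/\ irreducible rho X, irreducible rho X', isotropic b X &
               isotropic b X'] /\ (X + X')%VS = W j /\ (X :&: X')%VS = 0%VS)] /\
    (* (4) *)
    (forall U : {vspace vT}, irreducible rho U ->
       (U <= \sum_(l.+1 <= j < (l + m).+1) W j)%VS -> isotropic b U).
Proof.
move=> p4 HM HP b.
have n0 : (0 < p' + p'' + q)%N by lia.
pose i0 := Ordinal n0.
have i0E : val i0 = 0%N by [].
have p0 : (0 < p' + p'')%N by lia.
have p'n : (p' <= p' + p'' + q)%N by lia.
have n3 : (3 <= p' + p'' + q)%N by lia.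
have [l [m [W [[sumW dirW subW orthW] [[W0P ndW] [[irrW hypW] isoW]]]]]] :=
  abs_main (rho_lin HM) (bb_l HM HP i0E p0 p4 p'n) (bb_sym HM HP i0E p0 p4 p'n)
    (bb_inv HM HP i0E p0 p4 p'n) (compl_lemma HM).
exists l, m, W; split; first by split.
split; last by split.
split.
- move=> s t sW; apply: (Pi_orth HM HP i0E p0 p4 p'n (subW 0%N isT) sW).
  by move=> u uW; move/W0P: uW => ->.
- move=> i j il jl ne s t sW tW.
  apply: (Pi_orth HM HP i0E p0 p4 p'n (subW i il) sW).
  by move=> u uW; apply: (orthW i j).
- move=> i /andP[i1 il] v.
  have ilm : (1 <= i <= l + m)%N by rewrite i1 /=; lia.
  have [sub0 W0 _] := irrW i (introT andP (conj i1 il)).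
  have ps : vpick (W i) != 0 by rewrite vpick0.
  have [t tW bt] : exists2 t, t \in W i & b (vpick (W i)) t != 0.
    apply: NNPP => H; move/eqP: ps; apply; apply: (ndW i ilm) => [|t tW].
      exact: memv_pick.
    by apply: NNPP => bt; apply: H; exists t => //; apply/eqP.
  exact: (PiSpan HM HP i0E p0 p4 p'n (subW i (leq_trans il (leq_addr _ _))) n3
            (memv_pick _) tW bt v).
Qed.
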